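(* Let $\mathcal U$ be a finite nonempty set, let $\epsilon_1,\epsilon_2\in(0,1]$ and let $F_a,F_b\ge1$ be integers. For $p\in[\max\{\epsilon_1,\epsilon_2\},1]$ and nonnegative integer vectors $a=(a_v)_{v\in\mathcal U}$, $b=(b_v)_{v\in\mathcal U}$, let $$V(p;a,b)=\Big(\frac1p-1\Big)\gamma_{2,2}+\Big(\frac1{\epsilon_2}-\frac1p\Big)\gamma_{2,1}+\Big(\frac1{\epsilon_1}-\frac1p\Big)\gamma_{1,2}+\Big(\frac{p}{\epsilon_1\epsilon_2}-\frac1{\epsilon_1}-\frac1{\epsilon_2}+\frac1p\Big)\gamma_{1,1},\quad \gamma_{i,j}=\sum_v a_v^ib_v^j,$$ which is the variance of the COUNT join estimator under UBS parameters $(p,\epsilon_1/p)$ and $(p,\epsilon_2/p)$. Then the value of $p\in[\max\{\epsilon_1,\epsilon_2\},1]$ minimizing the worst-case variance $\max\{V(p;a,b): 0\le a_v\le F_a,\ 0\le b_v\le F_b \text{ for all } v\}$ is $$p=\min\Big\{1,\max\Big\{\epsilon_1,\epsilon_2,\sqrt{\epsilon_1\epsilon_2(F_aF_b-F_a-F_b+1)}\Big\}\Big\},$$ with corresponding uniform sampling rates $q_1=\epsilon_1/p$, $q_2=\epsilon_2/p$.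
   Context: Setting: two tables $T_1,T_2$ joined on a column $J$ with values in $\mathcal U$ are held by different parties; $a_v$, $b_v$ are the numbers of tuples of $T_1$, $T_2$ with $J$-value $v$, and the only information about the frequency vectors used is the maximum frequencies $F_a=\max_v a_v$ and $F_b=\max_v b_v$. Both tables use universe-Bernoulli sampling with the same universe rate $p$ (each tuple whose hashed join value is below $p$ is kept independently with probability $q_i$), with effective sampling rates $pq_i=\epsilon_i$; the COUNT estimator is $|S_1\bowtie S_2|/(pq_1q_2)$, whose variance equals $V(p;a,b)$ above. *)

(* Defs.v *)
(* R is an arbitrary real closed field (rcfType), which
   covers the reals; all quantities are algebraic. *)
From HB Require Import structures.
From mathcomp Require Import all_boot all_order all_algebra.
Set Implicit Arguments. Unset Strict Implicit. Unset Printing Implicit Defensive.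
Import Order.TTheory GRing.Theory Num.Theory.
Local Open Scope ring_scope.

Definition gamma (R : rcfType) (U : finType) (i j : nat) (a b : U -> nat) : R :=
  \sum_(v : U) (a v)%:R ^+ i * (b v)%:R ^+ j.

Definition Var (R : rcfType) (U : finType) (e1 e2 p : R) (a b : U -> nat) : R :=
    (p^-1 - 1) * gamma R 2 2 a b
  + (e2^-1 - p^-1) * gamma R 2 1 a b
  + (e1^-1 - p^-1) * gamma R 1 2 a b
  + (p / (e1 * e2) - e1^-1 - e2^-1 + p^-1) * gamma R 1 1 a b.

(* The fold starts from V(p;0,0),
   which is itself one of the values (a = b = 0), so this is exactly the
   maximum over the finite nonempty family. *)
Definition worst_var (R : rcfType) (U : finType) (e1 e2 : R) (Fa Fb : nat) (p : R) : R :=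
  \big[Num.max/Var e1 e2 p (fun _ : U => 0%N) (fun _ : U => 0%N)]_(a : {ffun U -> 'I_Fa.+1})
   \big[Num.max/Var e1 e2 p (fun _ : U => 0%N) (fun _ : U => 0%N)]_(b : {ffun U -> 'I_Fb.+1})
     Var e1 e2 p (fun v => nat_of_ord (a v)) (fun v => nat_of_ord (b v)).

Definition p_opt (R : rcfType) (e1 e2 : R) (Fa Fb : nat) : R :=
  Num.min 1 (Num.max (Num.max e1 e2)
    (Num.sqrt (e1 * e2 * ((Fa%:R : R) * Fb%:R - Fa%:R - Fb%:R + 1)))).

(* Main.v *)
Require Import Defs.
From mathcomp Require Import all_boot all_order all_algebra.
From mathcomp Require Import ring lra.
Import Order.TTheory GRing.Theory Num.Theory.
Set Implicit Arguments. Unset Strict Implicit. Unset Printing Implicit Defensive.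
Local Open Scope ring_scope.

Definition fterm (R : rcfType) (e1 e2 p x y : R) : R :=
  (p^-1 - 1) * (x^+2 * y^+2) + (e2^-1 - p^-1) * (x^+2 * y)
  + (e1^-1 - p^-1) * (x * y^+2) + (p/(e1*e2) - e1^-1 - e2^-1 + p^-1) * (x*y).

Lemma Var_sum (R : rcfType) (U : finType) (e1 e2 p : R) (a b : U -> nat) :
  Var e1 e2 p a b = \sum_v fterm e1 e2 p (a v)%:R (b v)%:R.
Proof.
rewrite /Var /gamma !mulr_sumr -!big_split /=.
by apply: eq_bigr => v _; rewrite /fterm; ring.
Qed.

Lemma mono2 (R : rcfType) (x y X Y : R) (i j : nat) :
  0 <= x -> x <= X -> 0 <= y -> y <= Y -> x ^+ i * y ^+ j <= X ^+ i * Y ^+ j.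
Proof.
move=> x0 xX y0 yY; apply: ler_pM; rewrite ?exprn_ge0 //.
  by rewrite lerXn2r // ?nnegrE // (le_trans x0).
by rewrite lerXn2r // ?nnegrE // (le_trans y0).
Qed.

Lemma fterm_mono (R : rcfType) (e1 e2 p x y X Y : R) :
  0 < e1 -> 0 < e2 -> Num.max e1 e2 <= p -> p <= 1 ->
  0 <= x -> x <= X -> 0 <= y -> y <= Y ->
  fterm e1 e2 p x y <= fterm e1 e2 p X Y.
Proof.
move=> he1 he2; rewrite ge_max => /andP[h1 h2] p1 x0 xX y0 yY.
have p0 : 0 < p by apply: lt_le_trans h1.
have c1 : 0 <= p^-1 - 1 by rewrite subr_ge0 invr_ge1 // ?unitfE ?gt_eqF.
have c2 : 0 <= e2^-1 - p^-1 by rewrite subr_ge0 lef_pV2.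
have c3 : 0 <= e1^-1 - p^-1 by rewrite subr_ge0 lef_pV2.
have c4 : 0 <= p/(e1*e2) - e1^-1 - e2^-1 + p^-1.
  have -> : p/(e1*e2) - e1^-1 - e2^-1 + p^-1 = (p - e1) * (p - e2) / (p * e1 * e2).
    by field; rewrite !gt_eqF.
  by rewrite divr_ge0 ?mulr_ge0 ?subr_ge0 // ?ltW.
rewrite /fterm; (apply: lerD; [apply: lerD; [apply: lerD|]|]); apply: ler_wpM2l => //.
- by apply: mono2.
- by rewrite -(expr1 y) -(expr1 Y); apply: mono2.
- by rewrite -(expr1 x) -(expr1 X); apply: mono2.
- by rewrite -(expr1 y) -(expr1 Y) -(expr1 x) -(expr1 X); apply: mono2.
Qed.

Lemma worst_eq (R : rcfType) (U : finType) (e1 e2 : R) (Fa Fb : nat) (p : R) :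
  0 < e1 -> 0 < e2 -> Num.max e1 e2 <= p -> p <= 1 ->
  worst_var U e1 e2 Fa Fb p = fterm e1 e2 p Fa%:R Fb%:R *+ #|U|.
Proof.
move=> he1 he2 hp p1.
have Bdef : \sum_(v : U) fterm e1 e2 p Fa%:R Fb%:R = fterm e1 e2 p Fa%:R Fb%:R *+ #|U|.
  by rewrite sumr_const.
rewrite -Bdef.
have bound : forall (a b : U -> nat), (forall v, a v <= Fa)%N -> (forall v, b v <= Fb)%N ->
   Var e1 e2 p a b <= \sum_(v : U) fterm e1 e2 p Fa%:R Fb%:R.
  move=> a b ha hb; rewrite Var_sum; apply: ler_sum => v _.
  by apply: fterm_mono => //; rewrite ?ler0n ?ler_nat.
apply/eqP; rewrite eq_le; apply/andP; split.
  apply: bigmax_le; first exact: bound.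
  move=> a _; apply: bigmax_le; first exact: bound.
  move=> b _; apply: bound => v; rewrite -ltnS; exact: ltn_ord.
set a0 := [ffun _ : U => (ord_max : 'I_Fa.+1)].
set b0 := [ffun _ : U => (ord_max : 'I_Fb.+1)].
apply: le_trans; last first.
  apply: (le_bigmax _ _ a0).
apply: le_trans; last first.
  apply: (le_bigmax _ _ b0).
by rewrite Var_sum; apply: ler_sum => v _; rewrite !ffunE.
Qed.
Lemma opt (R : rcfType) (m D : R) : 0 < m -> m <= 1 -> 0 <= D ->
  let t := Num.min 1 (Num.max m (Num.sqrt D)) in
  [/\ m <= t, t <= 1 &
   forall p, m <= p -> p <= 1 -> p != t -> 0 < (p - t) * (p * t - D)].
Proof.
move=> m0 m1 D0 t.
have sD : Num.sqrt D ^+ 2 = D by rewrite sqr_sqrtr.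
rewrite /t; set s := Num.sqrt D in sD *.
have s0 : 0 <= s by rewrite sqrtr_ge0.
have [h1|h1] := lerP 1 (Num.max m s).
  split => //.
  move=> p mp p1 pt.
  have pl : p < 1 by rewrite lt_neqAle pt p1.
  have [hs|hs] := lerP m s.
    move: h1; rewrite (max_r hs) => h1.
    have : 1 <= D by rewrite -sD -[1](expr1n R 2) lerXn2r // ?nnegrE.
    move=> D1; rewrite mulr1.
    have -> : (p - 1) * (p - D) = (1 - p) * (D - p) by ring.
    apply: mulr_gt0; lra.
  move: h1; rewrite (max_l (ltW hs)) => h1.
  have : m = 1 by lra.
  move=> e; lra.
split => //; first by rewrite le_max lexx.
  exact: ltW.
move=> p mp p1 pt.
have [hs|hs] := lerP m s.
  move: pt; rewrite (max_r hs) => pt.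
  have -> : (p - s) * (p * s - D) = s * (p - s)^+2.
    by rewrite -sD; ring.
  rewrite mulr_gt0 //; first lra.
  by rewrite exprn_even_gt0 // subr_eq0.
move: pt; rewrite (max_l (ltW hs)) => pt.
have pm : m < p by rewrite lt_neqAle eq_sym pt mp.
have : D <= m * m.
  by rewrite -sD expr2; apply: ler_pM => //; apply: ltW.
move=> Dm; apply: mulr_gt0; first lra.
have : m * m < p * m by rewrite ltr_pM2r.
lra.
Qed.

Lemma fterm_diff (R : rcfType) (e1 e2 p t X Y : R) :
  e1 != 0 -> e2 != 0 -> p != 0 -> t != 0 ->
  fterm e1 e2 p X Y - fterm e1 e2 t X Y =
  X * Y * ((p - t) * (p * t - e1 * e2 * (X * Y - X - Y + 1))) / (e1 * e2 * p * t).
Proof. by move=> *; rewrite /fterm; field; apply/and4P. Qed.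

Theorem theorem6 (R : rcfType) (U : finType) (e1 e2 : R) (Fa Fb : nat) :
  (0 < #|U|)%N ->
  0 < e1 -> e1 <= 1 -> 0 < e2 -> e2 <= 1 ->
  (1 <= Fa)%N -> (1 <= Fb)%N ->
  let pstar := p_opt e1 e2 Fa Fb in
  [/\ Num.max e1 e2 <= pstar, pstar <= 1,
      (forall p : R, Num.max e1 e2 <= p -> p <= 1 ->
         worst_var U e1 e2 Fa Fb pstar <= worst_var U e1 e2 Fa Fb p)
    & (forall p : R, Num.max e1 e2 <= p -> p <= 1 ->
         worst_var U e1 e2 Fa Fb p <= worst_var U e1 e2 Fa Fb pstar -> p = pstar)].
Proof.
move=> hU he1 e1l he2 e2l hFa hFb pstar.
have m0 : 0 < Num.max e1 e2 by rewrite lt_max he1.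
have m1 : Num.max e1 e2 <= 1 by rewrite ge_max e1l e2l.
have X1 : 1 <= (Fa%:R : R) by rewrite ler1n.
have Y1 : 1 <= (Fb%:R : R) by rewrite ler1n.
set D := e1 * e2 * ((Fa%:R : R) * Fb%:R - Fa%:R - Fb%:R + 1).
have D0 : 0 <= D.
  have -> : D = e1 * e2 * ((Fa%:R - 1) * (Fb%:R - 1)) by rewrite /D; ring.
  by rewrite !mulr_ge0 ?subr_ge0 // ltW.
have [o1 o2 o3] := opt m0 m1 D0.
have strict : forall p, Num.max e1 e2 <= p -> p <= 1 -> p != pstar ->
    worst_var U e1 e2 Fa Fb pstar < worst_var U e1 e2 Fa Fb p.
  move=> p mp p1 pt.
  have p0 : 0 < p by apply: lt_le_trans mp.
  have t0 : 0 < pstar by apply: lt_le_trans o1.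
  rewrite !worst_eq // -subr_gt0 -mulrnBl pmulrn_lgt0 //.
  rewrite fterm_diff ?gt_eqF // -/D.
  apply: divr_gt0; last by rewrite !mulr_gt0.
  apply: mulr_gt0; first by apply: mulr_gt0; apply: lt_le_trans X1 || apply: lt_le_trans Y1.
  exact: o3.
split => //.
  move=> p mp p1; have [->|pt] := eqVneq p pstar; first by [].
  exact/ltW/strict.
move=> p mp p1 hle; apply/eqP; apply: contraTT hle => pt.
by rewrite -ltNge; apply: strict.
Qed.
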